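(* Fix a $2\times 2$ unitary matrix $C_0=\begin{bmatrix} a & b\\ c & d\end{bmatrix}$ with $abcd\neq 0$ and a frequency $\xi\in\mathbb{R}$, and put $\omega=\arg(\det C_0)/2+\xi$. Suppose $|\cos\omega|>|a|$. Let $\lambda_+$ be the root with $|\lambda_+|>1$ of $\lambda^2-2\frac{\cos\omega}{|a|}\lambda+1=0$. Then for every $j\in\{0,1,2,\dots\}$, \[\lim_{M\to\infty}\mu_M(j)=(1-\lambda_+^{-2})\lambda_+^{-2j},\] where $\mu_M$ is the distribution of the comfortability of the walk with path length $M$ described in the context.
   Context: Notation: $|L\rangle=[1,0]^\top$, $|R\rangle=[0,1]^\top$. For an integer $M\ge1$ and $j\in\mathbb{Z}$ set $C(j)=C_0$ if $j\in\{0,\dots,M-1\}$ and $C(j)=I$ otherwise, and $P(j)=|L\rangle\langle L|C(j)$, $Q(j)=|R\rangle\langle R|C(j)$. The operator $U_M$ acts on uniformly bounded functions $\psi:\mathbb{Z}\to\mathbb{C}^2$ by $(U_M\psi)(j)=P(j+1)\psi(j+1)+Q(j-1)\psi(j-1)$. The initial state is $\psi_0(j)=e^{i\xi j}|R\rangle$ for $j\le 0$ and $\psi_0(j)=0$ for $j>0$, and $\psi_t=U_M^t\psi_0$. The state $e^{i\xi t}\psi_t$ converges pointwise to a stationary state as $t\to\infty$, and the distribution of the comfortability is $\mu_M(j)=\lim_{t\to\infty}\frac{\|\psi_t(j)\|^2}{\sum_{k=0}^{M-1}\|\psi_t(k)\|^2}$ for $j\in\{0,\dots,M-1\}$ (for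 fixed $j$ this is defined once $M>j$). *)

(* Defs.v *)
From Stdlib Require Import Reals ZArith Lia.
From Coquelicot Require Import Coquelicot.
Open Scope R_scope.

(* Column vectors in C^2 : first component = coefficient of |L>, second = |R>. *)
Definition C2 := (C * C)%type.

(* The local coin: C(j) = C0 on {0,...,M-1}, identity elsewhere.
   C0 = [[a, b], [c, d]]. *)
Record coin := Coin { ca : C; cb : C; cc : C; cd : C }.

Definition in_path (M : nat) (j : Z) : bool :=
  (0 <=? j)%Z && (j <? Z.of_nat M)%Z.

(* P(j) v = |L><L| C(j) v  -> only the L component, = first row of C(j) . v
   Q(j) v = |R><R| C(j) v  -> only the R component, = second row of C(j) . v *)
Definition rowL (C0 : coin) (M : nat) (j : Z) (v : C2) : C :=
  if in_path M j then Cplus (Cmult (ca C0) (fst v)) (Cmult (cb C0) (snd v))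
  else fst v.
Definition rowR (C0 : coin) (M : nat) (j : Z) (v : C2) : C :=
  if in_path M j then Cplus (Cmult (cc C0) (fst v)) (Cmult (cd C0) (snd v))
  else snd v.

Definition U (C0 : coin) (M : nat) (psi : Z -> C2) : Z -> C2 :=
  fun j => (rowL C0 M (j + 1)%Z (psi (j + 1)%Z),
            rowR C0 M (j - 1)%Z (psi (j - 1)%Z)).

Definition expi (x : R) : C := (cos x, sin x).

Definition psi0 (xi : R) : Z -> C2 :=
  fun j => if (j <=? 0)%Z then ((0%R, 0%R) : C, expi (xi * IZR j)) else ((0%R,0%R) : C, (0%R,0%R) : C).

Fixpoint psi (C0 : coin) (M : nat) (xi : R) (t : nat) : Z -> C2 :=
  match t with
  | O => psi0 xi
  | S t' => U C0 M (psi C0 M xi t')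
  end.

Definition norm2 (v : C2) : R := Cmod (fst v) ^ 2 + Cmod (snd v) ^ 2.

Fixpoint sum_upto (f : nat -> R) (n : nat) : R :=
  match n with
  | O => 0
  | S n' => sum_upto f n' + f n'
  end.

Definition comf_ratio (C0 : coin) (xi : R) (M : nat) (j : nat) (t : nat) : R :=
  norm2 (psi C0 M xi t (Z.of_nat j)) /
  sum_upto (fun k => norm2 (psi C0 M xi t (Z.of_nat k))) M.

(* C0 unitary (rows orthonormal, equivalent to C0 C0^* = I). *)
Definition unitary (C0 : coin) : Prop :=
  Cplus (Cmult (ca C0) (Cconj (ca C0))) (Cmult (cb C0) (Cconj (cb C0))) = RtoC 1 /\
  Cplus (Cmult (cc C0) (Cconj (cc C0))) (Cmult (cd C0) (Cconj (cd C0))) = RtoC 1 /\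
  Cplus (Cmult (ca C0) (Cconj (cc C0))) (Cmult (cb C0) (Cconj (cd C0))) = RtoC 0.

Definition detC (C0 : coin) : C :=
  Cminus (Cmult (ca C0) (cd C0)) (Cmult (cb C0) (cc C0)).

(* Main.v *)
Require Import Defs.
From Stdlib Require Import Reals ZArith Lia Lra Psatz.
From Coquelicot Require Import Coquelicot.
Open Scope R_scope.

Lemma Cmod2 (x : C) : Cmod x ^ 2 = fst x ^ 2 + snd x ^ 2.
Proof. unfold Cmod. rewrite pow2_sqrt; [ring|]. nra. Qed.

Lemma Ceq (x y : C) : fst x = fst y -> snd x = snd y -> x = y.
Proof. intros; apply injective_projections; auto. Qed.

Lemma expi_mult x y : (expi x * expi y)%C = expi (x + y).
Proof. unfold expi, Cmult; simpl. apply Ceq; simpl; rewrite ?cos_plus, ?sin_plus; ring. Qed.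

Lemma Cmod_expi x : Cmod (expi x) = 1.
Proof.
  unfold Cmod, expi; cbn [fst snd].
  replace (cos x ^ 2 + sin x ^ 2) with 1 by (pose proof (sin2_cos2 x); unfold Rsqr in H; nra).
  apply sqrt_1.
Qed.

Lemma expi_0 : expi 0 = RtoC 1.
Proof. unfold expi. rewrite cos_0, sin_0. reflexivity. Qed.

Lemma in_path_in M (k : nat) : (k < M)%nat -> in_path M (Z.of_nat k) = true.
Proof.
  intros H. unfold in_path. apply andb_true_intro. split.
  - apply Z.leb_le. lia.
  - apply Z.ltb_lt. lia.
Qed.

Lemma in_path_out M (j : Z) : (j < 0 \/ Z.of_nat M <= j)%Z -> in_path M j = false.
Proof.
  intros H. unfold in_path.
  destruct (Z.leb_spec 0 j); destruct (Z.ltb_spec j (Z.of_nat M)); simpl; auto; lia.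
Qed.

Lemma psi_S_fst C0 M xi t j :
  fst (psi C0 M xi (S t) j) = rowL C0 M (j+1) (psi C0 M xi t (j+1)).
Proof. reflexivity. Qed.
Lemma psi_S_snd C0 M xi t j :
  snd (psi C0 M xi (S t) j) = rowR C0 M (j-1) (psi C0 M xi t (j-1)).
Proof. reflexivity. Qed.

Lemma psi_R_left C0 M xi t j : (j <= 0)%Z ->
  snd (psi C0 M xi t j) = expi (xi * IZR (j - Z.of_nat t)).
Proof.
  revert j; induction t; intros j Hj.
  - simpl. unfold psi0. destruct (Z.leb_spec j 0); [|lia]. simpl.
    replace (j - 0)%Z with j by lia. reflexivity.
  - rewrite psi_S_snd. unfold rowR. rewrite in_path_out by lia.
    rewrite IHt by lia. do 3 f_equal. lia.
Qed.

Lemma psi_L_right C0 M xi t j : (Z.of_nat M <= j)%Z ->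
  fst (psi C0 M xi t j) = RtoC 0.
Proof.
  revert j; induction t; intros j Hj.
  - simpl. unfold psi0. destruct (Z.leb_spec j 0); reflexivity.
  - rewrite psi_S_fst. unfold rowL. rewrite in_path_out by lia.
    apply IHt. lia.
Qed.

Definition Xs C0 M xi t (k:nat) : C2 :=
  (Cmult (expi (xi * INR t)) (fst (psi C0 M xi t (Z.of_nat k))),
   Cmult (expi (xi * INR t)) (snd (psi C0 M xi t (Z.of_nat k)))).
Definition err C0 M xi (ph : nat -> C2) t k : C2 :=
  (Cminus (fst (Xs C0 M xi t k)) (fst (ph k)), Cminus (snd (Xs C0 M xi t k)) (snd (ph k))).

Definition stat (C0:coin) (M:nat) (z:C) (ph : nat -> C2) : Prop :=
  (forall k, (S k < M)%nat -> fst (ph k) = (z * (ca C0 * fst (ph (S k)) + cb C0 * snd (ph (S k))))%C) /\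
  (forall k, (S k < M)%nat -> snd (ph (S k)) = (z * (cc C0 * fst (ph k) + cd C0 * snd (ph k)))%C) /\
  fst (ph (pred M)) = RtoC 0 /\ snd (ph 0%nat) = RtoC 1.

Lemma expi_S xi t : expi (xi * INR (S t)) = (expi xi * expi (xi * INR t))%C.
Proof. rewrite expi_mult, S_INR. f_equal. ring. Qed.

Lemma err_L_step C0 M xi ph t k : stat C0 M (expi xi) ph -> (S k < M)%nat ->
  fst (err C0 M xi ph (S t) k) =
  (expi xi * (ca C0 * fst (err C0 M xi ph t (S k)) + cb C0 * snd (err C0 M xi ph t (S k))))%C.
Proof.
  intros [H1 [H2 [H3 H4]]] Hk. unfold err, Xs. cbn [fst snd].
  rewrite psi_S_fst. unfold rowL.
  replace (Z.of_nat k + 1)%Z with (Z.of_nat (S k)) by lia.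
  rewrite in_path_in by lia. rewrite H1 by auto. rewrite expi_S. ring.
Qed.

Lemma err_R_step C0 M xi ph t k : stat C0 M (expi xi) ph -> (S k < M)%nat ->
  snd (err C0 M xi ph (S t) (S k)) =
  (expi xi * (cc C0 * fst (err C0 M xi ph t k) + cd C0 * snd (err C0 M xi ph t k)))%C.
Proof.
  intros [H1 [H2 [H3 H4]]] Hk. unfold err, Xs. cbn [fst snd].
  rewrite psi_S_snd. unfold rowR.
  replace (Z.of_nat (S k) - 1)%Z with (Z.of_nat k) by lia.
  rewrite in_path_in by lia. rewrite H2 by auto. rewrite expi_S. ring.
Qed.

Lemma err_L_last C0 M xi ph t : stat C0 M (expi xi) ph -> (0 < M)%nat ->
  fst (err C0 M xi ph (S t) (pred M)) = RtoC 0.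
Proof.
  intros [H1 [H2 [H3 H4]]] Hk. unfold err, Xs. cbn [fst snd].
  rewrite psi_S_fst. unfold rowL.
  rewrite in_path_out by lia. rewrite psi_L_right by lia. rewrite H3. ring.
Qed.

Lemma err_R_first C0 M xi ph t : stat C0 M (expi xi) ph ->
  snd (err C0 M xi ph (S t) 0) = RtoC 0.
Proof.
  intros [H1 [H2 [H3 H4]]]. unfold err, Xs. cbn [fst snd].
  rewrite psi_S_snd. unfold rowR.
  rewrite in_path_out by lia. rewrite psi_R_left by lia. rewrite H4.
  rewrite expi_mult.
  replace (xi * INR (S t) + xi * IZR (Z.of_nat 0 - 1 - Z.of_nat t)) with 0.
  - rewrite expi_0. ring.
  - rewrite minus_IZR, minus_IZR, <- !INR_IZR_INZ, S_INR. simpl. ring.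
Qed.

Lemma sum_upto_ext f g n : (forall k, (k < n)%nat -> f k = g k) -> sum_upto f n = sum_upto g n.
Proof. induction n; intros H; simpl; auto. rewrite IHn by (intros; apply H; lia). rewrite H by lia. auto. Qed.
Lemma sum_upto_plus f g n : sum_upto (fun k => f k + g k) n = sum_upto f n + sum_upto g n.
Proof. induction n; simpl; [ring|]. rewrite IHn. ring. Qed.
Lemma sum_upto_shift f n : sum_upto f (S n) = f 0%nat + sum_upto (fun k => f (S k)) n.
Proof. induction n; simpl in *; [ring|]. rewrite IHn. ring. Qed.
Lemma sum_upto_nonneg f n : (forall k, 0 <= f k) -> 0 <= sum_upto f n.
Proof. intros H; induction n; simpl; [lra|]. specialize (H n). lra. Qed.
Lemma sum_upto_scal c f n : sum_upto (fun k => c * f k) n = c * sum_upto f n.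
Proof. induction n; simpl; [ring|]. rewrite IHn. ring. Qed.

Lemma sum_upto_S f n : sum_upto f (S n) = sum_upto f n + f n.
Proof. reflexivity. Qed.

Definition conserv (C0 : coin) : Prop := forall L R : C,
  Cmod (ca C0 * L + cb C0 * R)%C ^ 2 + Cmod (cc C0 * L + cd C0 * R)%C ^ 2 = Cmod L ^ 2 + Cmod R ^ 2.

Definition En C0 M xi ph t := sum_upto (fun k => norm2 (err C0 M xi ph t k)) M.

Lemma Cmod_expi_mult x y : Cmod (expi x * y)%C = Cmod y.
Proof. rewrite Cmod_mult, Cmod_expi. ring. Qed.

Lemma energy_step C0 M xi ph t : conserv C0 -> stat C0 M (expi xi) ph -> (0 < M)%nat ->
  En C0 M xi ph (S t) + Cmod (ca C0 * fst (err C0 M xi ph t 0) + cb C0 * snd (err C0 M xi ph t 0))%C ^ 2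
  <= En C0 M xi ph t.
Proof.
  intros Hc Hs HM. destruct M as [|m]; [lia|]. unfold En, norm2.

  set (u := fun k => Cmod (ca C0 * fst (err C0 (S m) xi ph t k) + cb C0 * snd (err C0 (S m) xi ph t k))%C ^ 2).
  set (w := fun k => Cmod (cc C0 * fst (err C0 (S m) xi ph t k) + cd C0 * snd (err C0 (S m) xi ph t k))%C ^ 2).
  rewrite sum_upto_plus.
  assert (E1 : sum_upto (fun k => Cmod (fst (err C0 (S m) xi ph (S t) k)) ^ 2) (S m)
              = sum_upto (fun k => u (S k)) m).
  { rewrite sum_upto_S. replace (fst (err C0 (S m) xi ph (S t) m)) with (RtoC 0).
    2:{ symmetry. apply (err_L_last C0 (S m) xi ph t Hs). lia. }
    rewrite Cmod_R, Rabs_R0. replace (0 ^ 2) with 0 by ring. rewrite Rplus_0_r.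
    apply sum_upto_ext. intros k Hk. unfold u. rewrite err_L_step by (auto; lia).
    rewrite Cmod_expi_mult. reflexivity. }
  assert (E2 : sum_upto (fun k => Cmod (snd (err C0 (S m) xi ph (S t) k)) ^ 2) (S m)
              = sum_upto (fun k => w k) m).
  { rewrite sum_upto_shift. rewrite (err_R_first C0 (S m) xi ph t Hs).
    rewrite Cmod_R, Rabs_R0. replace (0 ^ 2) with 0 by ring. rewrite Rplus_0_l.
    apply sum_upto_ext. intros k Hk. unfold w. rewrite err_R_step by (auto; lia).
    rewrite Cmod_expi_mult. reflexivity. }
  rewrite E1, E2.
  rewrite (sum_upto_ext (fun k => Cmod (fst (err C0 (S m) xi ph t k)) ^ 2 + Cmod (snd (err C0 (S m) xi ph t k)) ^ 2) (fun k => u k + w k)).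
  2:{ intros k _. unfold u, w. rewrite Hc. reflexivity. }
  rewrite sum_upto_plus. rewrite sum_upto_shift. rewrite (sum_upto_S w).
  assert (0 <= w m) by (unfold w; apply pow2_ge_0).
  change (sum_upto (fun k : nat => w k) m) with (sum_upto w m).
  change (Cmod (ca C0 * fst (err C0 (S m) xi ph t 0) + cb C0 * snd (err C0 (S m) xi ph t 0))%C ^ 2) with (u 0%nat).
  lra.
Qed.

Lemma decr_lim (E g : nat -> R) : (forall t, E (S t) + g t <= E t) -> (forall t, 0 <= E t) ->
  (forall t, 0 <= g t) -> is_lim_seq g 0.
Proof.
  intros H1 H2 H3.
  destruct (ex_finite_lim_seq_decr E 0) as [l Hl].
  - intros n; specialize (H1 n); specialize (H3 n); lra.
  - auto.
  - assert (HS : is_lim_seq (fun t => E (S t)) l) by (apply (is_lim_seq_incr_1 E l); auto).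
    pose proof (is_lim_seq_minus' _ _ _ _ Hl HS) as Hd.
    replace (l - l) with 0 in Hd by ring.
    apply (is_lim_seq_le_le (fun _ => 0) g (fun t => E t - E (S t))); auto.
    + intros n; specialize (H1 n); specialize (H3 n); lra.
    + apply is_lim_seq_const.
Qed.

Lemma lim_sqrt (x : nat -> C) : is_lim_seq (fun t => Cmod (x t) ^ 2) 0 -> is_lim_seq (fun t => Cmod (x t)) 0.
Proof.
  intros H. pose proof (is_lim_seq_continuous sqrt _ 0 (continuity_pt_sqrt 0 (Rle_refl 0)) H) as H'.
  rewrite sqrt_0 in H'. eapply is_lim_seq_ext; [|exact H'].
  intros n; simpl. apply sqrt_pow2, Cmod_ge_0.
Qed.

Lemma lim_bound (x : nat -> R) (y z : nat -> R) (al be : R) : 0 <= al -> 0 <= be ->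
  (forall t, 0 <= x t <= al * y t + be * z t) -> is_lim_seq y 0 -> is_lim_seq z 0 -> is_lim_seq x 0.
Proof.
  intros Ha Hb H Hy Hz.
  apply (is_lim_seq_le_le (fun _ => 0) x (fun t => al * y t + be * z t)); auto.
  - apply is_lim_seq_const.
  - replace 0 with (al * 0 + be * 0) by ring.
    apply is_lim_seq_plus'; apply (is_lim_seq_scal_l _ _ 0); auto.
Qed.

Lemma Cmod_minus_le (p q : C) : Cmod (p - q)%C <= Cmod p + Cmod q.
Proof.
  unfold Cminus. eapply Rle_trans; [apply Cmod_triangle|]. rewrite Cmod_opp. lra.
Qed.

Lemma solve_bound (a b x y : C) : a <> RtoC 0 ->
  Cmod x <= / Cmod a * Cmod (a * x + b * y)%C + (Cmod b / Cmod a) * Cmod y.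
Proof.
  intros Ha. assert (Hp : 0 < Cmod a) by (apply Cmod_gt_0; auto).
  assert (E : x = ((a * x + b * y - b * y) / a)%C) by (field; auto).
  rewrite E at 1. rewrite Cmod_div by auto.
  pose proof (Cmod_minus_le (a * x + b * y) (b * y)) as H.
  rewrite Cmod_mult in H.
  unfold Rdiv. apply (Rmult_le_reg_l (Cmod a)); auto.
  field_simplify; try lra. 
Qed.

Lemma err_to_0 C0 M xi ph : conserv C0 -> ca C0 <> RtoC 0 -> stat C0 M (expi xi) ph ->
  forall k, (k < M)%nat ->
  is_lim_seq (fun t => Cmod (fst (err C0 M xi ph t k))) 0 /\
  is_lim_seq (fun t => Cmod (snd (err C0 M xi ph t k))) 0.
Proof.
  intros Hc Ha Hs.
  assert (HM : forall k, (k < M)%nat -> (0 < M)%nat) by lia.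
  assert (Hu : (0 < M)%nat -> is_lim_seq (fun t => Cmod (ca C0 * fst (err C0 M xi ph t 0) + cb C0 * snd (err C0 M xi ph t 0))%C) 0).
  { intros H0. apply lim_sqrt.
    apply (decr_lim (En C0 M xi ph)).
    - intros t. apply energy_step; auto.
    - intros t. apply sum_upto_nonneg. intros k. unfold norm2.
      pose proof (pow2_ge_0 (Cmod (fst (err C0 M xi ph t k)))).
      pose proof (pow2_ge_0 (Cmod (snd (err C0 M xi ph t k)))). lra.
    - intros t. apply pow2_ge_0. }
  induction k; intros Hk.
  - specialize (Hu Hk).
    assert (Hsnd : is_lim_seq (fun t => Cmod (snd (err C0 M xi ph t 0))) 0).
    { apply (is_lim_seq_incr_1 (fun t => Cmod (snd (err C0 M xi ph t 0))) 0).
      eapply is_lim_seq_ext; [|apply is_lim_seq_const].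
      intros t. rewrite (err_R_first C0 M xi ph t Hs). rewrite Cmod_R, Rabs_R0. reflexivity. }
    split; auto.
    eapply (lim_bound _ _ _ (/ Cmod (ca C0)) (Cmod (cb C0) / Cmod (ca C0))); [| | |exact Hu|exact Hsnd].
    + apply Rlt_le, Rinv_0_lt_compat, Cmod_gt_0; auto.
    + apply Rmult_le_pos; [apply Cmod_ge_0|]. apply Rlt_le, Rinv_0_lt_compat, Cmod_gt_0; auto.
    + intros t. split; [apply Cmod_ge_0|]. apply solve_bound; auto.
  - destruct (IHk ltac:(lia)) as [HL HR].
    assert (Hsnd : is_lim_seq (fun t => Cmod (snd (err C0 M xi ph t (S k)))) 0).
    { apply (is_lim_seq_incr_1 (fun t => Cmod (snd (err C0 M xi ph t (S k)))) 0).
      eapply (lim_bound _ _ _ (Cmod (cc C0)) (Cmod (cd C0))); [| | |exact HL|exact HR].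
      + apply Cmod_ge_0.
      + apply Cmod_ge_0.
      + intros t. split; [apply Cmod_ge_0|]. rewrite (err_R_step C0 M xi ph t k Hs Hk).
        rewrite Cmod_expi_mult. rewrite <- !Cmod_mult. apply Cmod_triangle. }
    split; auto.
    assert (HL1 : is_lim_seq (fun t => Cmod (fst (err C0 M xi ph (S t) k))) 0)
      by (apply (is_lim_seq_incr_1 (fun t => Cmod (fst (err C0 M xi ph t k))) 0); auto).
    eapply (lim_bound _ _ _ (/ Cmod (ca C0)) (Cmod (cb C0) / Cmod (ca C0))); [| | |exact HL1|exact Hsnd].
    + apply Rlt_le, Rinv_0_lt_compat, Cmod_gt_0; auto.
    + apply Rmult_le_pos; [apply Cmod_ge_0|]. apply Rlt_le, Rinv_0_lt_compat, Cmod_gt_0; auto.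
    + intros t. split; [apply Cmod_ge_0|].
      rewrite (err_L_step C0 M xi ph t k Hs Hk). rewrite Cmod_expi_mult. apply solve_bound; auto.
Qed.

Lemma lim_Cmod_plus (p : C) (e : nat -> C) : is_lim_seq (fun t => Cmod (e t)) 0 ->
  is_lim_seq (fun t => Cmod (p + e t)%C ^ 2) (Cmod p ^ 2).
Proof.
  intros H.
  assert (H1 : is_lim_seq (fun t => Cmod (p + e t)%C) (Cmod p)).
  { apply (is_lim_seq_le_le (fun t => Cmod p - Cmod (e t)) _ (fun t => Cmod p + Cmod (e t))).
    - intros t. split.
      + pose proof (Cmod_minus_le (p + e t) (e t)).
        replace (p + e t - e t)%C with p in H0 by ring. lra.
      + apply Cmod_triangle.
    - replace (Finite (Cmod p)) with (Finite (Cmod p - 0)) by (f_equal; ring).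
      apply is_lim_seq_minus'; auto. apply is_lim_seq_const.
    - replace (Finite (Cmod p)) with (Finite (Cmod p + 0)) by (f_equal; ring).
      apply is_lim_seq_plus'; auto. apply is_lim_seq_const. }
  pose proof (is_lim_seq_mult' _ _ _ _ H1 H1) as H2.
  eapply is_lim_seq_ext; [|replace (Cmod p ^ 2) with (Cmod p * Cmod p) by ring; exact H2].
  intros t. simpl. ring.
Qed.

Lemma norm2_lim C0 M xi ph k : conserv C0 -> ca C0 <> RtoC 0 -> stat C0 M (expi xi) ph -> (k < M)%nat ->
  is_lim_seq (fun t => norm2 (psi C0 M xi t (Z.of_nat k))) (norm2 (ph k)).
Proof.
  intros Hc Ha Hs Hk. destruct (err_to_0 C0 M xi ph Hc Ha Hs k Hk) as [HL HR].
  unfold norm2. apply is_lim_seq_plus'.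
  - eapply is_lim_seq_ext; [|apply (lim_Cmod_plus (fst (ph k)) _ HL)].
    intros t. unfold err, Xs. cbn [fst snd]. rewrite <- (Cmod_expi_mult (xi * INR t) (fst (psi C0 M xi t (Z.of_nat k)))). f_equal. f_equal. ring.
  - eapply is_lim_seq_ext; [|apply (lim_Cmod_plus (snd (ph k)) _ HR)].
    intros t. unfold err, Xs. cbn [fst snd]. rewrite <- (Cmod_expi_mult (xi * INR t) (snd (psi C0 M xi t (Z.of_nat k)))). f_equal. f_equal. ring.
Qed.

Theorem time_limit C0 M xi ph j : conserv C0 -> ca C0 <> RtoC 0 -> stat C0 M (expi xi) ph -> (j < M)%nat ->
  is_lim_seq (comf_ratio C0 xi M j) (norm2 (ph j) / sum_upto (fun k => norm2 (ph k)) M).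
Proof.
  intros Hc Ha Hs Hj. unfold comf_ratio.
  apply is_lim_seq_div'.
  - apply norm2_lim; auto.
  - assert (forall n, (n <= M)%nat -> is_lim_seq (fun t => sum_upto (fun k => norm2 (psi C0 M xi t (Z.of_nat k))) n)
       (sum_upto (fun k => norm2 (ph k)) n)).
    { induction n; intros Hn; simpl.
      - apply is_lim_seq_const.
      - apply is_lim_seq_plus'. apply IHn; lia. apply norm2_lim; auto. }
    apply H; lia.
  - destruct M as [|m]; [lia|].
    rewrite sum_upto_shift.
    assert (0 <= sum_upto (fun k => norm2 (ph (S k))) m).
    { apply sum_upto_nonneg. intros k. unfold norm2.
      pose proof (pow2_ge_0 (Cmod (fst (ph (S k))))). pose proof (pow2_ge_0 (Cmod (snd (ph (S k))))). lra. }
    destruct Hs as [_ [_ [_ H4]]]. unfold norm2. rewrite H4, Cmod_R, Rabs_R1.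
    pose proof (pow2_ge_0 (Cmod (fst (ph 0%nat)))). rewrite pow1. unfold norm2 in H. intro; lra.
Qed.

Lemma Cconj_0 : Cconj (RtoC 0) = RtoC 0.
Proof. apply Ceq; simpl; ring. Qed.

Lemma expi_conj x : Cconj (expi x) = (/ expi x)%C.
Proof.
  assert (Hn : expi x <> RtoC 0).
  { intro H. pose proof (Cmod_expi x). rewrite H, Cmod_R, Rabs_R0 in H0. lra. }
  transitivity (/ expi x * (expi x * Cconj (expi x)))%C; [field; auto|].
  rewrite <- Cmod2_conj, Cmod_expi. rewrite pow1. field. auto.
Qed.

Lemma expi_neq0 x : expi x <> RtoC 0.
Proof. intro H. pose proof (Cmod_expi x). rewrite H, Cmod_R, Rabs_R0 in H0. lra. Qed.

Lemma unit_facts C0 th : unitary C0 -> detC C0 = expi th ->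
  cd C0 = (expi th * Cconj (ca C0))%C /\ cc C0 = (- (expi th * Cconj (cb C0)))%C /\
  Cmod (ca C0) ^ 2 + Cmod (cb C0) ^ 2 = 1.
Proof.
  intros [H1 [H2 H3]] HD.
  set (a := ca C0) in *; set (b := cb C0) in *; set (c := cc C0) in *; set (d := cd C0) in *.
  assert (K : (Cconj a * c + Cconj b * d)%C = RtoC 0).
  { transitivity (Cconj (a * Cconj c + b * Cconj d))%C.
    - rewrite Cplus_conj, !Cmult_conj, !Cconj_conj. ring.
    - rewrite H3. apply Cconj_0. }
  split; [|split].
  - rewrite <- HD. unfold detC. fold a b c d.
    transitivity ((a * d - b * c) * Cconj a - (d * (a * Cconj a + b * Cconj b - 1) - b * (Cconj a * c + Cconj b * d)))%C; [ring|].
    rewrite H1, K. ring.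
  - rewrite <- HD. unfold detC. fold a b c d.
    transitivity (- ((a * d - b * c) * Cconj b) + (a * (Cconj a * c + Cconj b * d) - c * (a * Cconj a + b * Cconj b - 1)))%C; [ring|].
    rewrite H1, K. ring.
  - apply RtoC_inj. rewrite RtoC_plus, !Cmod2_conj. exact H1.
Qed.

Lemma conserv_of C0 th : unitary C0 -> detC C0 = expi th -> cb C0 <> RtoC 0 -> conserv C0.
Proof.
  intros HU HD Hb. destruct (unit_facts C0 th HU HD) as [Hd [Hc Hab]].
  destruct HU as [H1 _].
  intros L R. apply RtoC_inj. rewrite !RtoC_plus, !Cmod2_conj.
  rewrite !Cplus_conj, !Cmult_conj. rewrite Hd, Hc. rewrite Copp_conj, !Cmult_conj, !Cconj_conj.
  rewrite expi_conj.
  assert (Hb' : Cconj (cb C0) = ((1 - ca C0 * Cconj (ca C0)) / cb C0)%C).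
  { rewrite <- H1. field. auto. }
  rewrite Hb'. field. split; auto. apply expi_neq0.
Qed.

Lemma expi_quad x : (RtoC 1 + expi x * expi x)%C = (RtoC (2 * cos x) * expi x)%C.
Proof.
  pose proof (sin2_cos2 x). unfold Rsqr in H.
  apply Ceq; unfold expi; simpl; nra.
Qed.

Definition kap C0 th : C := (expi (th / 2) * Cconj (ca C0) / RtoC (Cmod (ca C0)))%C.
Definition charp C0 (z mu : C) : C :=
  (z * ca C0 * mu * mu - (RtoC 1 + z * z * detC C0) * mu + z * cd C0)%C.

Lemma char_root C0 th xi nu : unitary C0 -> detC C0 = expi th -> ca C0 <> RtoC 0 ->
  nu ^ 2 - 2 * (cos (th / 2 + xi) / Cmod (ca C0)) * nu + 1 = 0 ->
  charp C0 (expi xi) (kap C0 th * RtoC nu)%C = RtoC 0.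
Proof.
  intros HU HD Ha Hnu. destruct (unit_facts C0 th HU HD) as [Hd [Hc Hab]].
  assert (Hr : Cmod (ca C0) <> 0) by (apply Rgt_not_eq, Cmod_gt_0; auto).
  assert (Hr' : RtoC (Cmod (ca C0)) <> RtoC 0) by (intro H; apply Hr; apply RtoC_inj; auto).
  unfold charp, kap. rewrite HD, Hd.
  set (r := Cmod (ca C0)) in *. set (cw := cos (th / 2 + xi)) in *.
  set (z := expi xi). set (h := expi (th / 2)).
  assert (HE : expi th = (h * h)%C).
  { unfold h. rewrite expi_mult. f_equal. field. }
  rewrite HE.
  assert (Haa : (ca C0 * Cconj (ca C0))%C = (RtoC r * RtoC r)%C).
  { rewrite <- Cmod2_conj. rewrite <- RtoC_mult. f_equal. fold r. ring. }
  assert (Hw : (RtoC 1 + (z * h) * (z * h))%C = (RtoC 2 * RtoC cw * (z * h))%C).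
  { unfold z, h. rewrite expi_mult, expi_quad. rewrite RtoC_mult. unfold cw.
    replace (xi + th / 2) with (th / 2 + xi) by ring. reflexivity. }
  assert (Hq : (RtoC nu * RtoC nu - RtoC 2 * (RtoC cw / RtoC r) * RtoC nu + RtoC 1)%C = RtoC 0).
  { rewrite <- Hnu. rewrite RtoC_plus, RtoC_minus, !RtoC_mult, RtoC_div by auto.
    rewrite RtoC_pow. simpl. ring. }
  set (ab := Cconj (ca C0)).
  transitivity (z * h * h * ab * (RtoC nu * RtoC nu * (ca C0 * ab) / (RtoC r * RtoC r) - RtoC 2 * (RtoC cw / RtoC r) * RtoC nu + RtoC 1)
     + (h * ab * RtoC nu / RtoC r) * (RtoC 2 * RtoC cw * (z * h) - (RtoC 1 + (z * h) * (z * h))))%C.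
  { field. auto. }
  unfold ab. rewrite Haa, Hw.
  transitivity (z * h * h * ab * (RtoC nu * RtoC nu - RtoC 2 * (RtoC cw / RtoC r) * RtoC nu + RtoC 1))%C.
  { unfold ab. field. auto. }
  rewrite Hq. ring.
Qed.

Definition modeL C0 (z mu : C) k : C := (mu ^ k * (mu - z * cd C0))%C.
Definition modeR C0 (z mu : C) k : C := (mu ^ k * (z * cc C0))%C.
Definition prof C0 (z m1 m2 : C) (M k : nat) : C2 :=
  (((m2 - z * cd C0) * modeL C0 z m1 k - (m1 - z * cd C0) * (m1 / m2) ^ (pred M) * modeL C0 z m2 k)%C,
   ((m2 - z * cd C0) * modeR C0 z m1 k - (m1 - z * cd C0) * (m1 / m2) ^ (pred M) * modeR C0 z m2 k)%C).

Lemma modeS1 C0 z mu k : charp C0 z mu = RtoC 0 ->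
  modeL C0 z mu k = (z * (ca C0 * modeL C0 z mu (S k) + cb C0 * modeR C0 z mu (S k)))%C.
Proof.
  intros H. unfold modeL, modeR. rewrite Cpow_S.
  transitivity (z * (ca C0 * (mu * mu ^ k * (mu - z * cd C0)) + cb C0 * (mu * mu ^ k * (z * cc C0))) - mu ^ k * charp C0 z mu)%C.
  - unfold charp, detC. ring.
  - rewrite H. ring.
Qed.

Lemma modeS3 C0 z mu k :
  modeR C0 z mu (S k) = (z * (cc C0 * modeL C0 z mu k + cd C0 * modeR C0 z mu k))%C.
Proof. unfold modeL, modeR. rewrite Cpow_S. ring. Qed.

Lemma prof_S1 C0 z m1 m2 M k : charp C0 z m1 = RtoC 0 -> charp C0 z m2 = RtoC 0 ->
  fst (prof C0 z m1 m2 M k) = (z * (ca C0 * fst (prof C0 z m1 m2 M (S k)) + cb C0 * snd (prof C0 z m1 m2 M (S k))))%C.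
Proof.
  intros H1 H2. unfold prof. cbn [fst snd]. rewrite (modeS1 C0 z m1 k H1), (modeS1 C0 z m2 k H2). ring.
Qed.

Lemma prof_S3 C0 z m1 m2 M k :
  snd (prof C0 z m1 m2 M (S k)) = (z * (cc C0 * fst (prof C0 z m1 m2 M k) + cd C0 * snd (prof C0 z m1 m2 M k)))%C.
Proof.
  unfold prof. cbn [fst snd]. rewrite (modeS3 C0 z m1 k), (modeS3 C0 z m2 k). ring.
Qed.

Lemma pow_ratio (m1 m2 : C) n : m2 <> RtoC 0 -> ((m1 / m2) ^ n * m2 ^ n)%C = (m1 ^ n)%C.
Proof. intros H. rewrite <- Cpow_mult_l. f_equal. field. auto. Qed.

Lemma prof_S2 C0 z m1 m2 M : m2 <> RtoC 0 -> fst (prof C0 z m1 m2 M (pred M)) = RtoC 0.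
Proof.
  intros H. unfold prof, modeL. cbn [fst snd].
  set (n := pred M).
  transitivity ((m2 - z * cd C0) * (m1 ^ n * (m1 - z * cd C0)) - (m1 - z * cd C0) * ((m1 / m2) ^ n * m2 ^ n) * (m2 - z * cd C0))%C; [ring|].
  rewrite pow_ratio by auto. ring.
Qed.

Lemma prof_R_last C0 z m1 m2 M : m2 <> RtoC 0 ->
  snd (prof C0 z m1 m2 M (pred M)) = (m1 ^ (pred M) * (z * cc C0) * (m2 - m1))%C.
Proof.
  intros H. unfold prof, modeR. cbn [fst snd].
  set (n := pred M).
  transitivity ((m2 - z * cd C0) * (m1 ^ n * (z * cc C0)) - (m1 - z * cd C0) * ((m1 / m2) ^ n * m2 ^ n) * (z * cc C0))%C; [ring|].
  rewrite pow_ratio by auto. ring.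
Qed.

Definition Fx C0 (v : C2) : R := Cmod (snd v) ^ 2 - Cmod (ca C0 * fst v + cb C0 * snd v)%C ^ 2.

Lemma flux_const C0 (z : C) (ph : nat -> C2) n : conserv C0 -> Cmod z = 1 ->
  (forall k, (S k <= n)%nat -> fst (ph k) = (z * (ca C0 * fst (ph (S k)) + cb C0 * snd (ph (S k))))%C) ->
  (forall k, (S k <= n)%nat -> snd (ph (S k)) = (z * (cc C0 * fst (ph k) + cd C0 * snd (ph k)))%C) ->
  Fx C0 (ph 0%nat) = Fx C0 (ph n).
Proof.
  intros Hc Hz H1 H3. induction n; [reflexivity|].
  rewrite IHn by (intros; auto). unfold Fx.
  pose proof (Hc (fst (ph n)) (snd (ph n))) as E.
  assert (EL : Cmod (fst (ph n)) = Cmod (ca C0 * fst (ph (S n)) + cb C0 * snd (ph (S n)))%C).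
  { rewrite (H1 n) at 1 by lia. rewrite Cmod_mult, Hz. ring. }
  assert (ER : Cmod (snd (ph (S n))) = Cmod (cc C0 * fst (ph n) + cd C0 * snd (ph n))%C).
  { rewrite (H3 n) by lia. rewrite Cmod_mult, Hz. ring. }
  rewrite ER. rewrite EL in E. lra.
Qed.

Lemma Cneq0_of_Cmod (x : C) : 0 < Cmod x -> x <> RtoC 0.
Proof. intros H E. rewrite E, Cmod_R, Rabs_R0 in H. lra. Qed.

Lemma prof_R0_neq C0 z m1 m2 M : conserv C0 -> Cmod z = 1 ->
  Cmod (ca C0) ^ 2 + Cmod (cb C0) ^ 2 = 1 -> ca C0 <> RtoC 0 -> cc C0 <> RtoC 0 ->
  charp C0 z m1 = RtoC 0 -> charp C0 z m2 = RtoC 0 -> 0 < Cmod m1 -> Cmod m1 < Cmod m2 ->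
  snd (prof C0 z m1 m2 M 0) <> RtoC 0.
Proof.
  intros Hc Hz Hab Ha Hcc H1 H2 Hm1 Hm12 H0.
  assert (Hm2 : m2 <> RtoC 0) by (apply Cneq0_of_Cmod; lra).
  pose proof (flux_const C0 z (prof C0 z m1 m2 M) (pred M) Hc Hz
     (fun k _ => prof_S1 C0 z m1 m2 M k H1 H2) (fun k _ => prof_S3 C0 z m1 m2 M k)) as F.
  unfold Fx in F. rewrite H0, (prof_S2 C0 z m1 m2 M Hm2) in F.
  rewrite Cmod_R, Rabs_R0 in F.
  replace (ca C0 * fst (prof C0 z m1 m2 M 0) + cb C0 * RtoC 0)%C with (ca C0 * fst (prof C0 z m1 m2 M 0))%C in F by ring.
  replace (ca C0 * RtoC 0 + cb C0 * snd (prof C0 z m1 m2 M (pred M)))%C with (cb C0 * snd (prof C0 z m1 m2 M (pred M)))%C in F by ring.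
  rewrite !Cmod_mult in F.
  set (R := Cmod (snd (prof C0 z m1 m2 M (pred M)))) in F.
  assert (HR : 0 < R).
  { unfold R. rewrite prof_R_last by auto. rewrite !Cmod_mult, Cmod_pow, Hz.
    assert (0 < Cmod (cc C0)) by (apply Cmod_gt_0; auto).
    assert (0 < Cmod (m2 - m1)%C).
    { apply Cmod_gt_0. intro E. assert (m2 = m1) by (transitivity (m1 + (m2 - m1))%C; [ring| rewrite E; ring]).
      subst. lra. }
    assert (0 < Cmod m1 ^ pred M) by (apply pow_lt; auto).
    repeat apply Rmult_lt_0_compat; lra. }
  assert (0 < Cmod (ca C0)) by (apply Cmod_gt_0; auto).
  pose proof (pow2_ge_0 (Cmod (ca C0) * Cmod (fst (prof C0 z m1 m2 M 0)))).
  assert (R ^ 2 - (Cmod (cb C0) * R) ^ 2 = R ^ 2 * Cmod (ca C0) ^ 2) by nra.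
  assert (0 < R ^ 2 * Cmod (ca C0) ^ 2) by (apply Rmult_lt_0_compat; apply pow_lt; auto).
  replace (0 ^ 2) with 0 in F by ring. lra.
Qed.

Definition nprof C0 z m1 m2 M k : C2 :=
  ((fst (prof C0 z m1 m2 M k) / snd (prof C0 z m1 m2 M 0))%C,
   (snd (prof C0 z m1 m2 M k) / snd (prof C0 z m1 m2 M 0))%C).

Lemma nprof_stat C0 z m1 m2 M : charp C0 z m1 = RtoC 0 -> charp C0 z m2 = RtoC 0 -> m2 <> RtoC 0 ->
  snd (prof C0 z m1 m2 M 0) <> RtoC 0 -> stat C0 M z (nprof C0 z m1 m2 M).
Proof.
  intros H1 H2 Hm2 Hs. unfold stat, nprof. cbn [fst snd]. split; [|split; [|split]].
  - intros k _. rewrite (prof_S1 C0 z m1 m2 M k H1 H2). field. auto.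
  - intros k _. rewrite (prof_S3 C0 z m1 m2 M k). field. auto.
  - rewrite (prof_S2 C0 z m1 m2 M Hm2). field. auto.
  - field. auto.
Qed.

Lemma norm2_nonneg v : 0 <= norm2 v.
Proof. unfold norm2. pose proof (pow2_ge_0 (Cmod (fst v))). pose proof (pow2_ge_0 (Cmod (snd v))). lra. Qed.

Theorem prof_limit C0 xi th m1 m2 M j : unitary C0 -> detC C0 = expi th ->
  ca C0 <> RtoC 0 -> cb C0 <> RtoC 0 -> cc C0 <> RtoC 0 ->
  charp C0 (expi xi) m1 = RtoC 0 -> charp C0 (expi xi) m2 = RtoC 0 -> 0 < Cmod m1 -> Cmod m1 < Cmod m2 ->
  (j < M)%nat ->
  is_lim_seq (comf_ratio C0 xi M j)
    (norm2 (prof C0 (expi xi) m1 m2 M j) / sum_upto (fun k => norm2 (prof C0 (expi xi) m1 m2 M k)) M).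
Proof.
  intros HU HD Ha Hb Hcc H1 H2 Hm1 Hm12 Hj.
  assert (Hc : conserv C0) by (eapply conserv_of; eauto).
  destruct (unit_facts C0 th HU HD) as [_ [_ Hab]].
  assert (Hm2 : m2 <> RtoC 0) by (apply Cneq0_of_Cmod; lra).
  pose proof (prof_R0_neq C0 (expi xi) m1 m2 M Hc (Cmod_expi xi) Hab Ha Hcc H1 H2 Hm1 Hm12) as Hs.
  pose proof (time_limit C0 M xi (nprof C0 (expi xi) m1 m2 M) j Hc Ha (nprof_stat C0 _ m1 m2 M H1 H2 Hm2 Hs) Hj) as T.
  set (s := snd (prof C0 (expi xi) m1 m2 M 0)) in *.
  assert (Hsp : 0 < Cmod s) by (apply Cmod_gt_0; auto).
  assert (En : forall k, norm2 (nprof C0 (expi xi) m1 m2 M k) = / Cmod s ^ 2 * norm2 (prof C0 (expi xi) m1 m2 M k)).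
  { intros k. unfold norm2, nprof. cbn [fst snd]. fold s. rewrite !Cmod_div by auto. field. lra. }
  rewrite En in T. rewrite (sum_upto_ext _ (fun k => / Cmod s ^ 2 * norm2 (prof C0 (expi xi) m1 m2 M k))) in T
    by (intros; apply En).
  rewrite sum_upto_scal in T.
  assert (Hpos : 0 < sum_upto (fun k => norm2 (prof C0 (expi xi) m1 m2 M k)) M).
  { destruct M as [|m]; [lia|]. rewrite sum_upto_shift.
    pose proof (sum_upto_nonneg (fun k => norm2 (prof C0 (expi xi) m1 m2 (S m) (S k))) m (fun k => norm2_nonneg _)).
    unfold norm2 at 1. fold s. pose proof (pow2_ge_0 (Cmod (fst (prof C0 (expi xi) m1 m2 (S m) 0)))).
    assert (0 < Cmod s ^ 2) by (apply pow_lt; auto). lra. }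
  replace (norm2 (prof C0 (expi xi) m1 m2 M j) / sum_upto (fun k => norm2 (prof C0 (expi xi) m1 m2 M k)) M)
    with (/ Cmod s ^ 2 * norm2 (prof C0 (expi xi) m1 m2 M j) /
       (/ Cmod s ^ 2 * sum_upto (fun k => norm2 (prof C0 (expi xi) m1 m2 M k)) M)); auto.
  field. split; lra.
Qed.

Lemma bernoulli d n : 0 <= d -> 1 + INR n * d <= (1 + d) ^ n.
Proof.
  intros Hd. induction n; [simpl; lra|].
  rewrite S_INR. change ((1 + d) ^ S n) with ((1 + d) * (1 + d) ^ n). pose proof (pos_INR n).
  assert (0 <= INR n * d * d) by (apply Rmult_le_pos; [apply Rmult_le_pos|]; lra).
  nra.
Qed.

Lemma pow_le1 x n : 0 <= x <= 1 -> x ^ n <= 1.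
Proof. intros H. induction n; simpl; [lra|]. assert (0 <= x ^ n) by (apply pow_le; lra). nra. Qed.

Lemma npow_lim q : 0 <= q < 1 -> is_lim_seq (fun n => INR n * q ^ n) 0.
Proof.
  intros [H0 H1]. destruct (Req_dec q 0) as [Hq|Hq].
  - subst. apply (is_lim_seq_incr_1 _ 0). eapply is_lim_seq_ext; [|apply is_lim_seq_const].
    intros n. simpl. ring.
  - set (s := sqrt q).
    assert (Hs0 : 0 < s) by (apply sqrt_lt_R0; lra).
    assert (Hs1 : s < 1) by (unfold s; rewrite <- sqrt_1; apply sqrt_lt_1; lra).
    assert (Hss : s * s = q) by (apply sqrt_sqrt; lra).
    set (d := / s - 1).
    assert (Hd : 0 < d).
    { unfold d. assert (1 < / s). { rewrite <- Rinv_1. apply Rinv_lt_contravar; lra. } lra. }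
    apply (is_lim_seq_le_le (fun _ => 0) _ (fun n => / d * s ^ n)).
    + intros n. split.
      * apply Rmult_le_pos; [apply pos_INR | apply pow_le; lra].
      * rewrite <- Hss, Rpow_mult_distr.
        pose proof (bernoulli d n (Rlt_le _ _ Hd)) as B.
        assert (E : (1 + d) * s = 1) by (unfold d; field; lra).
        assert (Hb : INR n * d * s ^ n <= 1).
        { rewrite <- (pow1 n), <- E, Rpow_mult_distr.
          apply Rmult_le_compat_r; [apply pow_le; lra|]. lra. }
        assert (0 <= s ^ n) by (apply pow_le; lra).
        apply (Rmult_le_reg_l d); auto.
        replace (d * (/ d * s ^ n)) with (s ^ n) by (field; lra).
        replace (d * (INR n * (s ^ n * s ^ n))) with ((INR n * d * s ^ n) * s ^ n) by ring.
        pattern (s ^ n) at 3. rewrite <- Rmult_1_l. apply Rmult_le_compat_r; auto.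
    + apply is_lim_seq_const.
    + replace (Finite 0) with (Rbar_mult (/ d) 0) by (simpl; f_equal; ring).
      apply is_lim_seq_scal_l. apply is_lim_seq_geom. rewrite Rabs_right; lra.
Qed.

Lemma sq_bound X Y Z : 0 <= X -> 0 <= Y -> 0 <= Z -> X - Y <= Z -> Z <= X + Y ->
  Rabs (Z ^ 2 - X ^ 2) <= 2 * X * Y + Y ^ 2.
Proof.
  intros. apply Rabs_le. split.
  - destruct (Rle_dec Y X).
    + assert ((X - Y) ^ 2 <= Z ^ 2) by (apply pow_incr; lra). nra.
    + nra.
  - assert (Z ^ 2 <= (X + Y) ^ 2) by (apply pow_incr; lra). nra.
Qed.

Lemma comp_bound (al be m1 m2 : C) rho n k : 0 < rho < 1 -> Cmod m1 = rho -> Cmod m2 = / rho -> (k <= n)%nat ->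
  Rabs (Cmod (al * m1 ^ k - be * (m1 / m2) ^ n * m2 ^ k)%C ^ 2 - Cmod al ^ 2 * (rho ^ 2) ^ k)
  <= (2 * Cmod al * Cmod be + Cmod be ^ 2) * (rho ^ 2) ^ n.
Proof.
  intros Hr H1 H2 Hk.
  assert (Hm2 : m2 <> RtoC 0) by (apply Cneq0_of_Cmod; rewrite H2; apply Rinv_0_lt_compat; lra).
  set (X := Cmod (al * m1 ^ k)%C). set (Y := Cmod (be * (m1 / m2) ^ n * m2 ^ k)%C).
  assert (HX : X = Cmod al * rho ^ k) by (unfold X; rewrite Cmod_mult, Cmod_pow, H1; auto).
  assert (Hrk : rho ^ k * (/ rho) ^ k = 1) by (rewrite <- Rpow_mult_distr, Rinv_r, pow1; lra).
  assert (Hn : rho ^ n = rho ^ k * rho ^ (n - k)) by (rewrite <- pow_add; f_equal; lia).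
  assert (HY : Y = Cmod be * rho ^ n * rho ^ (n - k)).
  { unfold Y. rewrite !Cmod_mult, !Cmod_pow, Cmod_div by auto. rewrite H1, H2.
    replace (rho / / rho) with (rho ^ 2) by (field; lra).
    rewrite <- pow_mult. replace (2 * n)%nat with (n + n)%nat by lia. rewrite pow_add.
    rewrite Hn at 2.
    transitivity (Cmod be * rho ^ n * rho ^ (n - k) * (rho ^ k * (/ rho) ^ k)); [ring|]. rewrite Hrk. ring. }
  assert (Hp1 : 0 <= rho ^ (n - k) <= 1).
  { split; [apply pow_le; lra|]. apply pow_le1; lra. }
  assert (Hpn : 0 <= rho ^ n) by (apply pow_le; lra).
  assert (Hpk : 0 <= rho ^ k) by (apply pow_le; lra).
  pose proof (Cmod_ge_0 al). pose proof (Cmod_ge_0 be).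
  pose proof (sq_bound X Y (Cmod (al * m1 ^ k - be * (m1 / m2) ^ n * m2 ^ k)%C)) as SB.
  assert (Hxy : X * Y <= Cmod al * Cmod be * (rho ^ 2) ^ n).
  { rewrite HX, HY. rewrite <- pow_mult. replace (2 * n)%nat with (n + n)%nat by lia. rewrite pow_add.
    rewrite Hn at 2. 
    assert (rho ^ (n - k) * rho ^ k <= rho ^ k) by nra.
    assert (0 <= Cmod al * Cmod be * rho ^ n) by (apply Rmult_le_pos; [apply Rmult_le_pos|]; lra).
    nra. }
  assert (Hyy : Y ^ 2 <= Cmod be ^ 2 * (rho ^ 2) ^ n).
  { rewrite HY. rewrite <- pow_mult. replace (2 * n)%nat with (n + n)%nat by lia. rewrite pow_add.
    assert (rho ^ (n - k) * rho ^ (n - k) <= 1) by nra.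
    assert (0 <= Cmod be ^ 2 * (rho ^ n * rho ^ n)) by (apply Rmult_le_pos; [apply pow2_ge_0|nra]).
    replace ((Cmod be * rho ^ n * rho ^ (n - k)) ^ 2) with (Cmod be ^ 2 * (rho ^ n * rho ^ n) * (rho ^ (n - k) * rho ^ (n - k))) by ring.
    nra. }
  assert (HX2 : Cmod al ^ 2 * (rho ^ 2) ^ k = X ^ 2) by (rewrite HX, <- pow_mult, Rpow_mult_distr, <- pow_mult; f_equal; f_equal; lia).
  rewrite HX2.
  eapply Rle_trans; [apply SB|].
  - unfold X; apply Cmod_ge_0.
  - unfold Y; apply Cmod_ge_0.
  - apply Cmod_ge_0.
  - pose proof (Cmod_triangle (al * m1 ^ k - be * (m1 / m2) ^ n * m2 ^ k)%C (be * (m1 / m2) ^ n * m2 ^ k)%C) as T.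
    replace (al * m1 ^ k - be * (m1 / m2) ^ n * m2 ^ k + be * (m1 / m2) ^ n * m2 ^ k)%C with (al * m1 ^ k)%C in T by ring.
    fold X Y in T. lra.
  - apply Cmod_minus_le.
  - nra.
Qed.

Lemma lim_close (u v e : nat -> R) (l : R) : (forall n, Rabs (u n - v n) <= e n) ->
  is_lim_seq v l -> is_lim_seq e 0 -> is_lim_seq u l.
Proof.
  intros H Hv He.
  apply (is_lim_seq_le_le (fun n => v n - e n) u (fun n => v n + e n)).
  - intros n. specialize (H n). apply Rabs_le_between in H. lra.
  - replace (Finite l) with (Finite (l - 0)) by (f_equal; ring). apply is_lim_seq_minus'; auto.
  - replace (Finite l) with (Finite (l + 0)) by (f_equal; ring). apply is_lim_seq_plus'; auto.
Qed.

Lemma geom_sum q n : q <> 1 -> sum_upto (fun k => q ^ k) n = (1 - q ^ n) / (1 - q).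
Proof.
  intros Hq. assert (1 - q <> 0) by lra.
  induction n; simpl sum_upto; [simpl; field; auto|]. rewrite IHn. simpl. field. auto.
Qed.

Lemma sum_upto_diff f g e n : (forall k, (k < n)%nat -> Rabs (f k - g k) <= e) ->
  Rabs (sum_upto f n - sum_upto g n) <= INR n * e.
Proof.
  induction n; intros H; simpl sum_upto.
  - simpl. rewrite Rminus_0_r, Rabs_R0. lra.
  - rewrite S_INR. replace (sum_upto f n + f n - (sum_upto g n + g n)) with ((sum_upto f n - sum_upto g n) + (f n - g n)) by ring.
    eapply Rle_trans; [apply Rabs_triang|].
    specialize (IHn (fun k Hk => H k ltac:(lia))). specialize (H n ltac:(lia)). lra.
Qed.

Lemma ratio_limit (N : nat -> nat -> R) (W K q : R) (j : nat) :
  0 < W -> 0 <= q < 1 ->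
  (forall n k, (k <= n)%nat -> Rabs (N n k - W * q ^ k) <= K * q ^ n) ->
  is_lim_seq (fun M => N (pred M) j / sum_upto (N (pred M)) M) ((1 - q) * q ^ j).
Proof.
  intros HW Hq HN.
  apply (is_lim_seq_incr_n _ (S j)).
  assert (Hqn : is_lim_seq (fun M => q ^ (M + j)) 0).
  { apply (is_lim_seq_incr_n (fun n => q ^ n) j 0). apply is_lim_seq_geom. rewrite Rabs_right; lra. }
  assert (Hnq : is_lim_seq (fun M => INR (S (M + j)) * q ^ (M + j)) 0).
  { apply (is_lim_seq_incr_n (fun n => INR (S n) * q ^ n) j 0).
    apply (is_lim_seq_ext (fun n => INR n * q ^ n + q ^ n)). { intros n. rewrite S_INR. ring. }
    replace (Finite 0) with (Finite (0 + 0)) by (f_equal; ring).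
    apply is_lim_seq_plus'.
    - apply npow_lim; auto.
    - apply is_lim_seq_geom; rewrite Rabs_right; lra. }
  eapply is_lim_seq_ext.
  { intros M. replace (pred (M + S j)) with (M + j)%nat by lia. replace (M + S j)%nat with (S (M + j)) by lia. reflexivity. }
  replace ((1 - q) * q ^ j) with ((W * q ^ j) / (W / (1 - q))) by (field; split; lra).
  apply is_lim_seq_div'.
  - apply (lim_close _ (fun _ => W * q ^ j) (fun M => K * q ^ (M + j))).
    + intros M. apply HN. lia.
    + apply is_lim_seq_const.
    + replace 0 with (K * 0) by ring. apply is_lim_seq_scal_l with (lu := 0). auto.
  - apply (lim_close _ (fun M => W * ((1 - q ^ (S (M + j))) / (1 - q))) (fun M => INR (S (M + j)) * (K * q ^ (M + j)))).
    + intros M. rewrite <- geom_sum by lra. rewrite <- sum_upto_scal.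
      apply sum_upto_diff. intros k Hk. apply HN. lia.
    + replace (W / (1 - q)) with (W * ((1 - 0) / (1 - q))) by (field; lra).
      apply (is_lim_seq_scal_l _ W ((1 - 0) / (1 - q))).
      unfold Rdiv. apply (is_lim_seq_scal_r _ (/ (1 - q)) (1 - 0)).
      apply is_lim_seq_minus'; [apply is_lim_seq_const|].
      apply (is_lim_seq_incr_1 (fun M => q ^ (M + j)) 0). auto.
    + apply (is_lim_seq_ext (fun M => K * (INR (S (M + j)) * q ^ (M + j)))). { intros M. ring. }
      replace 0 with (K * 0) by ring. apply is_lim_seq_scal_l with (lu := 0). auto.
  - intro. assert (0 < W / (1 - q)) by (apply Rdiv_lt_0_compat; lra). lra.
Qed.

Lemma norm2_prof_bound C0 z m1 m2 rho n k : 0 < rho < 1 -> Cmod m1 = rho -> Cmod m2 = / rho -> (k <= n)%nat ->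
  let v1 := (m1 - z * cd C0)%C in let v2 := (m2 - z * cd C0)%C in
  Rabs (norm2 (prof C0 z m1 m2 (S n) k) -
        (Cmod (v2 * v1)%C ^ 2 + Cmod (v2 * (z * cc C0))%C ^ 2) * (rho ^ 2) ^ k)
  <= ((2 * Cmod (v2 * v1)%C * Cmod (v1 * v2)%C + Cmod (v1 * v2)%C ^ 2) +
      (2 * Cmod (v2 * (z * cc C0))%C * Cmod (v1 * (z * cc C0))%C + Cmod (v1 * (z * cc C0))%C ^ 2)) * (rho ^ 2) ^ n.
Proof.
  intros Hr H1 H2 Hk v1 v2.
  unfold norm2, prof, modeL, modeR. cbn [fst snd pred].
  fold v1 v2.
  replace (v2 * (m1 ^ k * v1) - v1 * (m1 / m2) ^ n * (m2 ^ k * v2))%C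
    with ((v2 * v1) * m1 ^ k - (v1 * v2) * (m1 / m2) ^ n * m2 ^ k)%C by ring.
  replace (v2 * (m1 ^ k * (z * cc C0)) - v1 * (m1 / m2) ^ n * (m2 ^ k * (z * cc C0)))%C
    with ((v2 * (z * cc C0)) * m1 ^ k - (v1 * (z * cc C0)) * (m1 / m2) ^ n * m2 ^ k)%C by ring.
  pose proof (comp_bound (v2 * v1) (v1 * v2) m1 m2 rho n k Hr H1 H2 Hk) as B1.
  pose proof (comp_bound (v2 * (z * cc C0)) (v1 * (z * cc C0)) m1 m2 rho n k Hr H1 H2 Hk) as B2.
  rewrite !Rmult_plus_distr_r.
  match goal with |- Rabs (?A + ?B - (?C + ?D)) <= _ => replace (A + B - (C + D)) with ((A - C) + (B - D)) by ring;
    pose proof (Rabs_triang (A - C) (B - D)) end.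
  rewrite Rmult_plus_distr_r in B1, B2. lra.
Qed.

Theorem theorem3p2 (C0 : coin) (xi : R) :
  unitary C0 ->
  Cmult (Cmult (ca C0) (cb C0)) (Cmult (cc C0) (cd C0)) <> RtoC 0 ->
  forall theta : R, detC C0 = expi theta ->
  let omega := theta / 2 + xi in
  Rabs (cos omega) > Cmod (ca C0) ->
  forall lam : R,
    lam ^ 2 - 2 * (cos omega / Cmod (ca C0)) * lam + 1 = 0 ->
    Rabs lam > 1 ->
  forall j : nat,
  exists mu : nat -> R,
    (forall M : nat, (j < M)%nat -> is_lim_seq (comf_ratio C0 xi M j) (mu M)) /\
    is_lim_seq mu ((1 - / lam ^ 2) * / lam ^ (2 * j)).
Proof.
  intros HU Hprod theta HD omega Hcos lam Hlam Hl1 j.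
  unfold omega in *.
  assert (Ha : ca C0 <> RtoC 0) by (intro E; apply Hprod; rewrite E; ring).
  assert (Hb : cb C0 <> RtoC 0) by (intro E; apply Hprod; rewrite E; ring).
  assert (Hc : cc C0 <> RtoC 0) by (intro E; apply Hprod; rewrite E; ring).
  destruct (unit_facts C0 theta HU HD) as [Hd [_ Hab]].
  assert (Hl0 : lam <> 0) by (intro E; rewrite E, Rabs_R0 in Hl1; lra).
  set (r := Cmod (ca C0)) in *.
  assert (Hr : 0 < r) by (apply Cmod_gt_0; auto).
  assert (Hr1 : r <= 1) by (pose proof (pow2_ge_0 (Cmod (cb C0))); nra).
  set (z := expi xi).
  set (m1 := (kap C0 theta * RtoC (/ lam))%C).
  set (m2 := (kap C0 theta * RtoC lam)%C).
  assert (Hk : Cmod (kap C0 theta) = 1).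
  { unfold kap. rewrite Cmod_div, Cmod_mult, Cmod_expi, Cmod_conj, Cmod_R.
    - fold r. rewrite Rabs_right by lra. field. lra.
    - intro E. apply RtoC_inj in E. fold r in E. lra. }
  set (rho := / Rabs lam).
  assert (Hrho : 0 < rho < 1).
  { unfold rho. split. apply Rinv_0_lt_compat; lra.
    rewrite <- Rinv_1. apply Rinv_lt_contravar; lra. }
  assert (Hm1 : Cmod m1 = rho) by (unfold m1, rho; rewrite Cmod_mult, Hk, Cmod_R, Rabs_inv; ring).
  assert (Hm2 : Cmod m2 = / rho) by (unfold m2, rho; rewrite Cmod_mult, Hk, Cmod_R, Rinv_inv; ring).
  assert (Hc1 : charp C0 z m1 = RtoC 0).
  { apply char_root; auto. fold r.
    replace ((/ lam) ^ 2 - 2 * (cos (theta / 2 + xi) / r) * / lam + 1)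
      with ((lam ^ 2 - 2 * (cos (theta / 2 + xi) / r) * lam + 1) / lam ^ 2) by (field; lra).
    rewrite Hlam. field. auto. }
  assert (Hc2 : charp C0 z m2 = RtoC 0) by (apply char_root; auto).
  set (N := fun n k => norm2 (prof C0 z m1 m2 (S n) k)).
  exists (fun M => N (pred M) j / sum_upto (N (pred M)) M).
  split.
  - intros M HM. destruct M as [|m]; [lia|]. unfold N. simpl pred.
    apply (prof_limit C0 xi theta m1 m2 (S m) j); auto.
    + rewrite Hm1; lra.
    + rewrite Hm1, Hm2. assert (1 < / rho) by (rewrite <- Rinv_1; apply Rinv_lt_contravar; lra). lra.
  - set (v1 := (m1 - z * cd C0)%C). set (v2 := (m2 - z * cd C0)%C).
    assert (Hv2 : v2 <> RtoC 0).
    { intro E. assert (m2 = (z * cd C0)%C) by (transitivity (v2 + z * cd C0)%C; [unfold v2; ring| rewrite E; ring]).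
      assert (Cmod m2 = r).
      { rewrite H, Cmod_mult, Hd, Cmod_mult, Cmod_conj. unfold z. rewrite !Cmod_expi. fold r. ring. }
      rewrite Hm2 in H0. unfold rho in H0. rewrite Rinv_inv in H0. lra. }
    assert (HW : 0 < Cmod (v2 * v1)%C ^ 2 + Cmod (v2 * (z * cc C0))%C ^ 2).
    { assert (0 < Cmod (v2 * (z * cc C0))%C).
      { apply Cmod_gt_0. apply Cmult_neq_0; auto. apply Cmult_neq_0; auto. apply expi_neq0. }
      pose proof (pow2_ge_0 (Cmod (v2 * v1)%C)). assert (0 < Cmod (v2 * (z * cc C0))%C ^ 2) by (apply pow_lt; auto). lra. }
    replace ((1 - / lam ^ 2) * / lam ^ (2 * j)) with ((1 - rho ^ 2) * (rho ^ 2) ^ j).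
    2:{ assert (Hq : rho ^ 2 = / lam ^ 2) by (unfold rho; rewrite pow_inv, pow2_abs; reflexivity).
        rewrite Hq, pow_inv, <- pow_mult. reflexivity. }
    apply (ratio_limit N _ ((2 * Cmod (v2 * v1)%C * Cmod (v1 * v2)%C + Cmod (v1 * v2)%C ^ 2) + (2 * Cmod (v2 * (z * cc C0))%C * Cmod (v1 * (z * cc C0))%C + Cmod (v1 * (z * cc C0))%C ^ 2)) (rho ^ 2) j HW).
    + split; [apply pow2_ge_0|]. nra.
    + intros n k Hkn. apply (norm2_prof_bound C0 z m1 m2 rho n k Hrho Hm1 Hm2 Hkn).
Qed.
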